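(* Let $X_1,\dots,X_n$ be Polish spaces, $1\le k<n$, and $\mu_\alpha\in\mathcal{P}(X_\alpha)$ for $\alpha\in\mathcal{I}_{nk}$. Let $A\subseteq X$ be a measurable set with $\mathrm{sth}(A)=0$. Then there exist measurable sets $Y_\alpha\subseteq X_\alpha$, $\alpha\in\mathcal{I}_{nk}$, with $\mu_\alpha(Y_\alpha)=0$ for all $\alpha$ and $A\subseteq\bigcup_{\alpha\in\mathcal{I}_{nk}}\mathrm{Pr}_\alpha^{-1}(Y_\alpha)$.
   Context: $X=\prod_iX_i$; $\mathcal{I}_{nk}$ is the family of $k$-element subsets of $\{1,\dots,n\}$; $X_\alpha=\prod_{i\in\alpha}X_i$, $\mathrm{Pr}_\alpha:X\to X_\alpha$ the projection. The proper $(n,k)$-thickness of a measurable $A\subseteq X$ is $\mathrm{sth}(A)=\inf\{\sum_{\alpha\in\mathcal{I}_{nk}}\mu_\alpha(Y_\alpha):\ Y_\alpha\subseteq X_\alpha\text{ measurable},\ A\subseteq\bigcup_{\alpha\in\mathcal{I}_{nk}}\mathrm{Pr}_\alpha^{-1}(Y_\alpha)\}$. *)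

(* Defs.v *)
From HB Require Import structures.
From mathcomp Require Import all_boot all_order all_algebra.
From mathcomp Require Import all_classical all_reals all_analysis.

Set Implicit Arguments.
Unset Strict Implicit.
Unset Printing Implicit Defensive.
Import Order.TTheory GRing.Theory Num.Theory.
Local Open Scope classical_set_scope.
Local Open Scope ring_scope.

Definition is_metric (R : realType) (T : Type) (d : T -> T -> R) : Prop :=
  [/\ forall x y, 0 <= d x y,
      forall x y, d x y = 0 <-> x = y,
      forall x y, d x y = d y x &
      forall x y z, d x z <= d x y + d y z].

Definition metric_induces (R : realType) (T : topologicalType)
  (d : T -> T -> R) : Prop :=
  forall U : set T, open U <->
    (forall x, U x -> exists2 e : R, 0 < e & [set y | d x y < e] `<=` U).

Definition metric_complete (R : realType) (T : Type) (d : T -> T -> R) : Prop :=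
  forall u : nat -> T,
    (forall e : R, 0 < e -> exists N : nat, forall m p : nat,
        (N <= m)%N -> (N <= p)%N -> d (u m) (u p) < e) ->
    exists l : T, forall e : R, 0 < e ->
      exists N : nat, forall m : nat, (N <= m)%N -> d (u m) l < e.

Definition polish (R : realType) (T : topologicalType) : Prop :=
  (exists D : set T, countable D /\ closure D = [set: T]) /\
  (exists d : T -> T -> R,
      [/\ is_metric d, metric_induces d & metric_complete d]).

Definition borel_sets (T : topologicalType) : set (set T) := <<s open >>.

Section Products.
Local Unset Implicit Arguments.
Variables (n : nat) (T : 'I_n -> ptopologicalType).

Definition Xa (alpha : {set 'I_n}) : Type :=
  forall j : {i : 'I_n | i \in alpha}, T (sval j).

Definition Xall : Type := forall i : 'I_n, T i.

(* generators of the product sigma-algebra on X_alpha: cylinders over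
   Borel sets of one coordinate *)
Definition cylA (alpha : {set 'I_n}) : set (set (Xa alpha)) :=
  [set C | exists (j : {i : 'I_n | i \in alpha}) (B : set (T (sval j))),
      borel_sets B /\ C = (fun x : Xa alpha => x j) @^-1` B].

Definition cylX : set (set Xall) :=
  [set C | exists (i : 'I_n) (B : set (T i)),
      borel_sets B /\ C = (fun x : Xall => x i) @^-1` B].

Definition Prj (alpha : {set 'I_n}) (x : Xall) : Xa alpha :=
  fun j => x (sval j).

Definition sth (R : realType) (k : nat)
  (mu : forall alpha : {set 'I_n}, probability (g_sigma_algebraType (cylA alpha)) R)
  (A : set Xall) : \bar R :=
  ereal_inf [set (\sum_(alpha : {set 'I_n} | #|alpha| == k) mu alpha (Y alpha))%E
            | Y in [set Y : forall alpha : {set 'I_n}, set (Xa alpha) |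
                 (forall alpha : {set 'I_n}, #|alpha| = k -> <<s cylA alpha >> (Y alpha)) /\
                 A `<=` bigcup [set alpha : {set 'I_n} | #|alpha| = k]
                          (fun alpha => Prj alpha @^-1` Y alpha)]].
End Products.
Arguments Xa {n} T alpha.
Arguments Xall {n} T.
Arguments cylA {n} T alpha.
Arguments cylX {n} T.
Arguments Prj {n T} alpha x.
Arguments sth {n T R} k mu A.

(* Main.v *)
Require Import Defs.
From HB Require Import structures.
From mathcomp Require Import all_boot all_order all_algebra.
From mathcomp Require Import all_classical all_reals all_analysis.
Import Order.TTheory GRing.Theory Num.Theory.
Local Open Scope classical_set_scope.
Local Open Scope ring_scope.

Lemma pigeon_inf (I : finType) (a : nat -> I) :
  exists i : I, forall N, exists2 m, (N <= m)%N & a m = i.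
Proof.
apply: contrapT => /forallNP H.
have H2 : forall i : I, exists N : nat, forall m, (N <= m)%N -> a m != i.
  move=> i; have /existsNP [N HN] := H i; exists N => m Nm; apply/eqP => E.
  by apply: HN; exists m.
have [f Hf] := choice H2.
pose M := (\max_(i : I) f i)%N.
have := Hf (a M) M (leq_bigmax _); by rewrite eqxx.
Qed.

Theorem mainTheorem11 (R : realType) (n k : nat) (T : 'I_n -> ptopologicalType)
  (hpolish : forall i, polish R (T i))
  (hk1 : (1 <= k)%N) (hkn : (k < n)%N)
  (mu : forall alpha : {set 'I_n}, probability (g_sigma_algebraType (cylA T alpha)) R)
  (A : set (Xall T)) (hA : <<s cylX T >> A)
  (h0 : sth k mu A = 0%E) :
  exists Y : forall alpha : {set 'I_n}, set (Xa T alpha),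
    (forall alpha : {set 'I_n}, #|alpha| = k ->
       <<s cylA T alpha >> (Y alpha) /\ mu alpha (Y alpha) = 0%E) /\
    A `<=` bigcup [set alpha : {set 'I_n} | #|alpha| = k]
             (fun alpha => Prj alpha @^-1` Y alpha).
Proof.
pose eps (m : nat) : R := 1 / (2 ^ m.+1)%:R.
have eps_gt0 m : 0 < eps m by rewrite /eps divr_gt0 // ltr0n expn_gt0.
have H m : exists Y : forall alpha : {set 'I_n}, set (Xa T alpha),
   ((forall alpha : {set 'I_n}, #|alpha| = k -> <<s cylA T alpha >> (Y alpha)) /\
    A `<=` bigcup [set alpha : {set 'I_n} | #|alpha| = k]
                  (fun alpha => Prj alpha @^-1` Y alpha)) /\
   (\sum_(alpha : {set 'I_n} | #|alpha| == k) mu alpha (Y alpha) < (eps m)%:E)%E.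
  have : (sth k mu A < (eps m)%:E)%E by rewrite h0 lte_fin.
  move/ereal_inf_lt => [y [Y HY <-] Hy].
  by exists Y.
have [Ys HYs] := choice H.
have Hle (m : nat) (alpha : {set 'I_n}) : #|alpha| = k -> (mu alpha (Ys m alpha) <= (eps m)%:E)%E.
  move=> ha; have [_ Hs] := HYs m.
  apply: le_trans (ltW Hs).
  rewrite (bigD1 alpha) /=; last by rewrite ha.
  by apply: leeDl; apply: sume_ge0 => b _; exact: measure_ge0.
exists (fun alpha : {set 'I_n} => if #|alpha| == k then lim_sup_set (fun m => Ys m alpha) else set0).
split.
  move=> alpha ha; rewrite ha eqxx; split.
    change (measurable (lim_sup_set (fun m => (Ys m alpha : set (g_sigma_algebraType (cylA T alpha)))))).
    apply: bigcap_measurable; first by exists 0%N.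
    move=> N _; apply: bigcup_measurable => m _.
    by have [[HM _] _] := HYs m; exact: HM.
  apply: lim_sup_set_cvg0.
    by move=> m; have [[HM _] _] := HYs m; exact: HM.
  apply: (@le_lt_trans _ _ 1%:E); last by rewrite ltry.
  apply: le_trans (epsilon_trick0 xpredT ler01).
  apply: lee_nneseries; first by move=> i _ _; exact: measure_ge0.
  by move=> i _; apply: Hle.
move=> x Ax.
have Hm m : exists alpha : {set 'I_n}, #|alpha| = k /\ Ys m alpha (Prj alpha x).
  have [[_ Hc] _] := HYs m; have [alpha ha hx] := Hc x Ax.
  by exists alpha.
have [a Ha] := choice Hm.
have [alpha Halpha] := (@pigeon_inf _ a).
have [m _ am] := Halpha 0%N.
have [ha _] := Ha m; rewrite am in ha.
exists alpha => //=; rewrite ha eqxx.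
move=> N _; have [m' Nm' am'] := Halpha N.
exists m' => //; have [_ hx] := Ha m'; by rewrite -am'.
Qed.
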